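(* Let $k\ge 2$ and $l\ge 1$ be integers. If there exists an abelian-$k$th-power-free infinite word over an alphabet of $l$ letters, then for every alphabet $\Sigma$ with $|\Sigma|=2l-1$ and every antimorphic involution $\theta$ on $\Sigma^*$, there exists an infinite word over $\Sigma$ that is pseudo-$k$th-power-free with respect to $\theta$.
   Context: For a word $w$ and letter $a$, $|w|_a$ is the number of occurrences of $a$ in $w$. A nonempty word $w$ is an abelian $k$th power if $w=u_1\cdots u_k$ with $|u_i|_a=|u_j|_a$ for all letters $a$ and all $1\le i,j\le k$; a word is abelian-$k$th-power-free if none of its factors (contiguous subwords) is an abelian $k$th power. A function $\theta:\Sigma^*\to\Sigma^*$ is an antimorphic involution if $\theta(uv)=\theta(v)\theta(u)$ and $\theta(\theta(w))=w$. A nonempty word $w$ is a pseudo $k$th power with respect to $\theta$ if $w=u_1\cdots u_k$ where for all $1\le i,j\le k$, $u_i=u_j$ or $u_i=\theta(u_j)$; a word is pseudo-$k$th-power-free if no factor of it is a pseudo $k$th power. *)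

(* Defs.v *)
From mathcomp Require Import all_boot.
Set Implicit Arguments. Unset Strict Implicit. Unset Printing Implicit Defensive.

Definition ifactor (T : Type) (w : nat -> T) (i n : nat) : seq T :=
  mkseq (fun j => w (i + j)) n.

Definition abelian_power (T : eqType) (k : nat) (w : seq T) : Prop :=
  w <> [::] /\
  exists us : seq (seq T),
    [/\ size us = k, flatten us = w &
        forall u v, u \in us -> v \in us -> forall a : T, count_mem a u = count_mem a v].

Definition abelian_power_free (T : eqType) (k : nat) (w : nat -> T) : Prop :=
  forall i n, ~ abelian_power k (ifactor w i n).

Definition antimorphic_involution (T : Type) (theta : seq T -> seq T) : Prop :=
  (forall u v, theta (u ++ v) = theta v ++ theta u) /\
  (forall u, theta (theta u) = u).

Definition pseudo_power (T : eqType) (theta : seq T -> seq T) (k : nat) (w : seq T) : Prop :=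
  w <> [::] /\
  exists us : seq (seq T),
    [/\ size us = k, flatten us = w &
        forall u v, u \in us -> v \in us -> u = v \/ u = theta v].

Definition pseudo_power_free (T : eqType) (theta : seq T -> seq T) (k : nat) (w : nat -> T) : Prop :=
  forall i n, ~ pseudo_power theta k (ifactor w i n).

(* Main.v *)
Require Import Defs.
From mathcomp Require Import all_boot.
From mathcomp Require Import zify.

Section Th.
Variable (T : eqType) (theta : seq T -> seq T).
Hypothesis (hth : antimorphic_involution theta).

Lemma th_nil : theta [::] = [::].
Proof.
case: hth => hc _. have := congr1 size (hc [::] [::]). rewrite /= size_cat.
by case: (theta [::]) => //= a s; lia.
Qed.

Lemma th_ne u : u <> [::] -> theta u <> [::].
Proof. case: hth => _ hi => hu h; apply: hu; by rewrite -(hi u) h th_nil. Qed.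

Lemma th_single x : size (theta [:: x]) = 1.
Proof.
case: hth => hc hi. case E: (theta [:: x]) => [|y [|z r]] //.
  by have := hi [:: x]; rewrite E th_nil.
have := congr1 size (hi [:: x]). rewrite E -cat1s hc size_cat /=.
have h1 : theta (z :: r) <> [::] by apply: th_ne.
have h2 : theta [:: y] <> [::] by apply: th_ne.
case: (theta (z :: r)) h1 => // ? ? _; case: (theta [:: y]) h2 => //= ? ? _; lia.
Qed.

Definition thf (x : T) := head x (theta [:: x]).

Lemma th_singleE x : theta [:: x] = [:: thf x].
Proof. rewrite /thf; have := th_single x; by case: (theta [:: x]) => [|? []]. Qed.

Lemma thE s : theta s = rev (map thf s).
Proof.
case: hth => hc _. elim: s => [|x s IH]; first by rewrite th_nil.
by rewrite -cat1s hc IH th_singleE /= rev_cons cats1.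
Qed.

Lemma thfK : involutive thf.
Proof. case: hth => _ hi x. have := hi [:: x]. by rewrite !th_singleE => -[]. Qed.

Lemma count_th a s : count_mem a (theta s) = count_mem (thf a) s.
Proof.
rewrite thE count_rev count_map; apply: eq_count => y /=.
apply/eqP/eqP => [<-|->]; by rewrite thfK.
Qed.
End Th.

Lemma pullback (T S : eqType) (theta : seq S -> seq S) (hth : antimorphic_involution theta)
  (g : T -> S) (ginj : injective g)
  (gorb : forall a b, @thf S theta (g a) = g b -> a = b) k s :
  pseudo_power theta k (map g s) -> abelian_power k s.
Proof.
case=> hne [us [hsz hfl hp]]; split.
  by move=> E; apply: hne; rewrite E.
have Hus : map (map g) (reshape (shape us) s) = us.
  by rewrite map_reshape -hfl flattenK.
exists (reshape (shape us) s); split.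
- by rewrite size_reshape size_map.
- apply: reshapeKr. by rewrite -size_flatten -(size_map g) -hfl.
move=> v v' hv hv' a.
have cg : forall w, count_mem a w = count_mem (g a) (map g w).
  move=> w; rewrite count_map; apply: eq_count => y /=.
  by apply/eqP/eqP => [->|/ginj ->].
have hu : map g v \in us by rewrite -Hus; apply: map_f.
have hu' : map g v' \in us by rewrite -Hus; apply: map_f.
rewrite !cg.
have key : forall w w', theta (map g w') = map g w ->
    count_mem (g a) (map g w) = count_mem (g a) (map g w').
  move=> w w' E.
  have E' : theta (map g w) = map g w'.
    by case: hth => _ hi; rewrite -E hi.
  rewrite -E !count_th //.
  case: (eqVneq (@thf S theta (g a)) (g a)) => [->//|hn].
  have z : forall w0, count_mem (@thf S theta (g a)) (map g w0) = 0.
    move=> w0; apply/eqP; rewrite -leqn0 leqNgt -has_count; apply/hasP => -[y /mapP [b _ ->]] /= /eqP Hb.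
    have ab := gorb _ _ (esym Hb). by move: hn; rewrite -Hb -ab eqxx.
  rewrite z.
  have := E'; move/(congr1 (count_mem (g a))); rewrite count_th // z.
  by move=> ->.
case: (hp _ _ hu hu') => [->//|E].
by rewrite (key v v').
Qed.

Theorem mainTheorem13 (k l : nat) (hk : 2 <= k) (hl : 1 <= l) :
  (exists w : nat -> 'I_l, abelian_power_free k w) ->
  forall (Sigma : finType), #|Sigma| = 2 * l - 1 ->
  forall theta : seq Sigma -> seq Sigma, antimorphic_involution theta ->
  exists w : nat -> Sigma, pseudo_power_free theta k w.
Proof.
move=> [w hw] Sigma hcard theta hth.
pose f := @thf Sigma theta.
have fK : involutive f by apply: thfK.
have : 0 < #|Sigma| by lia.
case/card_gt0P => x0 _.
pose S := [set x | enum_rank x <= enum_rank (f x)].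
have hS : l <= #|S|.
  have sub : [set f x | x in ~: S] \subset S.
    apply/subsetP => y /imsetP [x]; rewrite !inE -ltnNge => hx ->.
    by rewrite fK ltnW.
  have := subset_leq_card sub; rewrite card_imset; last exact: can_inj fK.
  have := cardsC S; lia.
pose g (a : 'I_l) := nth x0 (enum S) a.
have hsz : size (enum S) = #|S| by rewrite cardE.
have gS : forall a, g a \in S.
  move=> a; rewrite -mem_enum /g mem_nth // hsz; exact: leq_trans (ltn_ord a) hS.
have ginj : injective g.
  move=> a1 b1 /eqP.
  have ha : a1 < size (enum S) by rewrite hsz; exact: leq_trans (ltn_ord a1) hS.
  have hb : b1 < size (enum S) by rewrite hsz; exact: leq_trans (ltn_ord b1) hS.
  rewrite /g (nth_uniq _ ha hb (enum_uniq _)).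
  by move/eqP/val_inj.
have gorb : forall a b, f (g a) = g b -> a = b.
  move=> a0 b0 E; apply: ginj; rewrite -E.
  have := gS a0; have := gS b0; rewrite !inE -E fK => h1 h2.
  apply: enum_rank_inj; apply: val_inj; apply/eqP; rewrite eqn_leq h1 h2 //.
exists (fun n => g (w n)) => i n hp.
apply: (hw i n); have := @pullback _ _ theta hth g ginj gorb k (ifactor w i n); apply.
by move: hp; rewrite /ifactor /mkseq -map_comp.
Qed.
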